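(* Let $\mathcal{M}=\langle M,\circ,e\rangle$ be an mge monoid and let $m,n\in M$ be such that the equation $mx=n$ has a solution $x\in M$. Then the solution is unique, and if $\langle x_1,x_2\rangle$ is an mge of $\langle m,n\rangle$ then $x_2$ is invertible and $x=x_1x_2^{-1}$.
   Context: In a monoid $\langle M,\circ,e\rangle$, a tuple $\langle m_1,\dots,m_n\rangle\in M^n$ is equalizable if there is $\langle x_1,\dots,x_n\rangle\in M^n$ (an equalizer) with $m_1x_1=\dots=m_nx_n$; an equalizer is a most general equalizer (mge) if every equalizer has the form $\langle x_1x,\dots,x_nx\rangle$ for some $x\in M$. An mge monoid is a monoid with right cancellation ($ac=bc\Rightarrow a=b$) in which every equalizable pair has an mge. An element $m$ is invertible if $mn=e$ for some $n\in M$; this $n$ is unique and denoted $m^{-1}$. *)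

(* Defs.v *)
Definition is_monoid {M : Type} (op : M -> M -> M) (e : M) : Prop :=
  (forall a b c, op (op a b) c = op a (op b c)) /\
  (forall a, op e a = a) /\ (forall a, op a e = a).

Definition right_cancellative {M : Type} (op : M -> M -> M) : Prop :=
  forall a b c, op a c = op b c -> a = b.

Definition is_equalizer2 {M : Type} (op : M -> M -> M) (m1 m2 x1 x2 : M) : Prop :=
  op m1 x1 = op m2 x2.

Definition equalizable2 {M : Type} (op : M -> M -> M) (m1 m2 : M) : Prop :=
  exists x1 x2, is_equalizer2 op m1 m2 x1 x2.

Definition is_mge2 {M : Type} (op : M -> M -> M) (m1 m2 x1 x2 : M) : Prop :=
  is_equalizer2 op m1 m2 x1 x2 /\
  (forall y1 y2, is_equalizer2 op m1 m2 y1 y2 ->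
     exists x, y1 = op x1 x /\ y2 = op x2 x).

Definition mge_monoid {M : Type} (op : M -> M -> M) (e : M) : Prop :=
  is_monoid op e /\ right_cancellative op /\
  (forall m1 m2, equalizable2 op m1 m2 -> exists x1 x2, is_mge2 op m1 m2 x1 x2).

Definition invertible {M : Type} (op : M -> M -> M) (e m : M) : Prop :=
  exists n, op m n = e.

(* Main.v *)
Require Import Defs.

Theorem lemma4 (M : Type) (op : M -> M -> M) (e : M)
  (HM : mge_monoid op e) (m n x : M) (hx : op m x = n) :
  (forall x' : M, op m x' = n -> x' = x) /\
  (forall x1 x2 : M, is_mge2 op m n x1 x2 ->
     invertible op e x2 /\
     (forall y : M, op x2 y = e -> x = op x1 y)).
Proof.
  destruct HM as [[HA [Hl Hr]] [Hc Hmge]].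
  assert (Heq : equalizable2 op m n).
  { exists x, e. unfold is_equalizer2. rewrite Hr. exact hx. }
  assert (key : forall x1 x2, is_mge2 op m n x1 x2 ->
    exists z, x = op x1 z /\ op x2 z = e /\
      (forall y, op x2 y = e -> y = z)).
  { intros x1 x2 [_ H]. destruct (H x e) as [z [H1 H2]].
    { unfold is_equalizer2. rewrite Hr. exact hx. }
    exists z. split; [exact H1|]. split; [auto|].
    assert (Hzx : op z x2 = e).
    { apply (Hc _ _ z). rewrite HA, <- H2, Hr, Hl. reflexivity. }
    intros y Hy.
    rewrite <- (Hl y), <- Hzx, HA, Hy, Hr. reflexivity. }
  destruct (Hmge m n Heq) as [x1 [x2 Hm]].
  split.
  - intros x' hx'.
    destruct (key x1 x2 Hm) as [z [Hz1 [Hz2 Hz3]]].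
    destruct Hm as [_ H]. destruct (H x' e) as [z' [H1 H2]].
    { unfold is_equalizer2. rewrite Hr. exact hx'. }
    rewrite H1, Hz1, (Hz3 z' (eq_sym H2)). reflexivity.
  - intros y1 y2 Hy.
    destruct (key y1 y2 Hy) as [z [Hz1 [Hz2 Hz3]]].
    split. exists z; exact Hz2.
    intros y Hyy. rewrite (Hz3 y Hyy). exact Hz1.
Qed.
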